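(* Let $T:X\rightrightarrows X^*$ be a multivalued operator. If $S(T,K)=S(T^\rho,K)$ for all $K\subset X$, or $M(T,K)=M(T^\rho,K)$ for all $K\subset X$, then $T$ is pre-maximal pseudomonotone.
   Context: $X$ is a real Banach space with dual $X^*$ and pairing $\langle x,x^*\rangle=x^*(x)$. A multivalued operator $T:X\rightrightarrows X^*$ is identified with its graph $T\subset X\times X^*$; $T(x)=\{x^*:(x,x^* )\in T\}$. For $K\subset X$: $S(T,K)=\{x\in K: \exists x^*\in T(x),\ \langle y-x,x^*\rangle\ge0\ \forall y\in K\}$ and $M(T,K)=\{x\in K: \langle x-y,y^*\rangle\le0\ \forall (y,y^* )\in T \text{ with } y\in K\}$. For $(x,x^* ),(y,y^* )\in X\times X^*$, write $(x,x^* )\sim_p(y,y^* )$ if either $\min\{\langle x-y,y^*\rangle,\langle y-x,x^*\rangle\}<0$ or $\langle x-y,y^*\rangle=\langle y-x,x^*\rangle=0$. The pseudomonotone polar is $T^\rho=\{(x,x^* ): (x,x^* )\sim_p(y,y^* )\ \forall (y,y^* )\in T\}$. $T$ is pseudomonotone if for all $(x,x^* ),(y,y^* )\in T$, $\langle y-x,x^*\rangle\ge0$ implies $\langle y-x,y^*\rangle\ge0$; $T$ is pre-maximal pseudomonotone if both $T$ and $T^\rho$ are pseudomonotone. *)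

(* Defs.v *)
From Stdlib Require Import Reals.
Open Scope R_scope.

Record Banach := {
  B :> Type;
  bzero : B;
  badd : B -> B -> B;
  bopp : B -> B;
  bscal : R -> B -> B;
  bnorm : B -> R;
  badd_assoc : forall x y z, badd x (badd y z) = badd (badd x y) z;
  badd_comm : forall x y, badd x y = badd y x;
  badd_0 : forall x, badd x bzero = x;
  badd_opp : forall x, badd x (bopp x) = bzero;
  bscal_1 : forall x, bscal 1 x = x;
  bscal_assoc : forall a b x, bscal a (bscal b x) = bscal (a * b) x;
  bscal_distr_l : forall a x y, bscal a (badd x y) = badd (bscal a x) (bscal a y);
  bscal_distr_r : forall a b x, bscal (a + b) x = badd (bscal a x) (bscal b x);
  bnorm_eq0 : forall x, bnorm x = 0 -> x = bzero;
  bnorm_scal : forall a x, bnorm (bscal a x) = Rabs a * bnorm x;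
  bnorm_tri : forall x y, bnorm (badd x y) <= bnorm x + bnorm y;
  bcomplete : forall u : nat -> B,
    (forall eps, eps > 0 -> exists N, forall m n, (m >= N)%nat -> (n >= N)%nat ->
        bnorm (badd (u m) (bopp (u n))) < eps) ->
    exists l, forall eps, eps > 0 -> exists N, forall n, (n >= N)%nat ->
        bnorm (badd (u n) (bopp l)) < eps
}.

Arguments badd {_} _ _.
Arguments bopp {_} _.
Arguments bscal {_} _ _.
Arguments bnorm {_} _.

Definition bsub {X : Banach} (x y : X) : X := badd x (bopp y).

(** Topological dual X^*: continuous (= bounded) linear functionals. *)
Record dual (X : Banach) := {
  dfun :> X -> R;
  dfun_add : forall x y, dfun (badd x y) = dfun x + dfun y;
  dfun_scal : forall a x, dfun (bscal a x) = a * dfun x;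
  dfun_bounded : exists c, forall x, Rabs (dfun x) <= c * bnorm x
}.

Definition pairing {X : Banach} (x : X) (f : dual X) : R := dfun X f x.

(** Multivalued operators identified with their graphs. *)
Definition operator (X : Banach) := X -> dual X -> Prop.

Definition S_set {X : Banach} (T : operator X) (K : X -> Prop) (x : X) : Prop :=
  K x /\ exists xs, T x xs /\ forall y, K y -> pairing (bsub y x) xs >= 0.

Definition M_set {X : Banach} (T : operator X) (K : X -> Prop) (x : X) : Prop :=
  K x /\ forall y ys, T y ys -> K y -> pairing (bsub x y) ys <= 0.

Definition sim_p {X : Banach} (x : X) (xs : dual X) (y : X) (ys : dual X) : Prop :=
  Rmin (pairing (bsub x y) ys) (pairing (bsub y x) xs) < 0 \/
  (pairing (bsub x y) ys = 0 /\ pairing (bsub y x) xs = 0).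

Definition rho {X : Banach} (T : operator X) : operator X :=
  fun x xs => forall y ys, T y ys -> sim_p x xs y ys.

Definition pseudomonotone {X : Banach} (T : operator X) : Prop :=
  forall x xs y ys, T x xs -> T y ys ->
    pairing (bsub y x) xs >= 0 -> pairing (bsub y x) ys >= 0.

Definition pre_maximal_pseudomonotone {X : Banach} (T : operator X) : Prop :=
  pseudomonotone T /\ pseudomonotone (rho T).

(* Main.v *)
Require Import Defs.
From Stdlib Require Import Reals Lra.
Open Scope R_scope.

Lemma pair_sub (X : Banach) (a b : X) (f : dual X) :
  pairing (bsub a b) f = dfun X f a - dfun X f b.
Proof.
  unfold pairing, bsub. rewrite dfun_add.
  assert (H0 : dfun X f (bzero X) = 0).
  { pose proof (dfun_add X f (bzero X) (bzero X)) as H.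
    rewrite badd_0 in H. lra. }
  pose proof (dfun_add X f b (bopp b)) as H. rewrite badd_opp, H0 in H. lra.
Qed.

Lemma rmin_nonneg (a b : R) : Rmin a b < 0 -> a >= 0 -> b >= 0 -> False.
Proof. unfold Rmin; destruct Rle_dec; lra. Qed.

Ltac ps := repeat rewrite pair_sub in *.

Theorem mainTheorem19 (X : Banach) (T : operator X) :
  ((forall (K : X -> Prop) (x : X), S_set T K x <-> S_set (rho T) K x) \/
   (forall (K : X -> Prop) (x : X), M_set T K x <-> M_set (rho T) K x)) ->
  pre_maximal_pseudomonotone T.
Proof.
  intros [HS | HM]; split; intros x xs y ys Hx Hy Hxy;
    apply Rnot_lt_ge; intro Hneg;
    set (K := fun z : X => z = x \/ z = y).
  - assert (Hin : S_set T K x).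
    { split. left; reflexivity. exists xs; split; auto.
      intros z [-> | ->]; ps; lra. }
    apply HS in Hin. destruct Hin as [_ [zs [Hz Hz2]]].
    specialize (Hz2 y (or_intror eq_refl)).
    destruct (Hz y ys Hy) as [Hm | [Ha Hb]]; ps.
    + eapply rmin_nonneg; [exact Hm| |]; ps; lra.
    + lra.
  - assert (Hin : S_set (rho T) K x).
    { split. left; reflexivity. exists xs; split; auto.
      intros z [-> | ->]; ps; lra. }
    apply HS in Hin. destruct Hin as [_ [zs [Hz Hz2]]].
    specialize (Hz2 y (or_intror eq_refl)).
    destruct (Hy x zs Hz) as [Hm | [Ha Hb]]; ps.
    + eapply rmin_nonneg; [exact Hm| |]; ps; lra.
    + lra.
  - assert (Hin : M_set (rho T) K x).
    { split. left; reflexivity.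
      intros w ws Hw [-> | ->]; ps; [lra|].
      apply Rnot_lt_le; intro Hp.
      destruct (Hw x xs Hx) as [Hm | [Ha Hb]]; ps.
      + eapply rmin_nonneg; [exact Hm| |]; ps; lra.
      + lra. }
    apply HM in Hin. destruct Hin as [_ Hin].
    specialize (Hin y ys Hy (or_intror eq_refl)). ps; lra.
  - assert (Hin : M_set T K x).
    { split. left; reflexivity.
      intros w ws Hw [-> | ->]; ps; [lra|].
      apply Rnot_lt_le; intro Hp.
      destruct (Hx y ws Hw) as [Hm | [Ha Hb]]; ps.
      + eapply rmin_nonneg; [exact Hm| |]; ps; lra.
      + lra. }
    apply HM in Hin. destruct Hin as [_ Hin].
    specialize (Hin y ys Hy (or_intror eq_refl)). ps; lra.
Qed.
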